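(* Let $G$ be hyperbolic relative to $P_1,\dots,P_s$, and let $T_{\rm thick}\subset T$ be as in the context. Let $u,v$ be distinct non-parabolic points lying in the same connected component of $\partial G$. Then there exists $w\in\partial G$ such that $(u,v,w)\in T_{\rm thick}$.
   Context: Relative hyperbolicity is in the sense of Bowditch; $\partial G$ is the Bowditch boundary, a compact Hausdorff space on which $G$ acts as a convergence group; parabolic points are the fixed points of conjugates of the $P_i$. $T=\{(x,y,z)\in(\partial G)^3:x\neq y\neq z\neq x\}$ is triple space with the diagonal $G$-action. $T\cup\partial G$ is topologized so that a sequence $(u_i,v_i,w_i)$ in $T$ converges to $x\in\partial G$ iff at least two of the sequences $(u_i),(v_i),(w_i)$ converge to $x$. Let $p_1,\dots,p_s$ be representatives of the $G$-orbits of parabolic points with $P_i=\mathrm{Stab}_G(p_i)$. A cusp neighborhood of $p_i$ is a subset $T-\mathrm{Stab}_G(p_i)K$, where $K$ is a compact subset of $T\cup\partial G$ containing an open neighborhood of some compact $C\subset\partial G-\{p_i\}$ with $\mathrm{Stab}_G(p_i)C=\partial G-\{p_i\}$. Open cusp neighborhoods $B_i$ of $p_i$ ($i=1,\dots,s$) are chosen so that the sets $gB_i$ ($g\in G/P_i$, $i=1,\dots,s$) are pairwise disjoint and $T_{\rm thick}:=T-\bigcup_{i=1}^s\bigcup_{g\in G}gB_i$ projects onto a compact subspace of $G\backslash T$. *)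

(* Defs.v *)
From HB Require Import structures.
From mathcomp Require Import all_boot all_order all_algebra.
From mathcomp Require Import all_classical all_reals all_analysis.
From Stdlib Require Import List.

Set Implicit Arguments.
Unset Strict Implicit.
Unset Printing Implicit Defensive.

Import Order.TTheory GRing.Theory Num.Theory.
Local Open Scope classical_set_scope.

Section RelHyp.

Context (G : Type) (mul : G -> G -> G) (one : G) (inv : G -> G).

Definition is_group : Prop :=
  (forall a b c, mul a (mul b c) = mul (mul a b) c) /\
  (forall a, mul one a = a /\ mul a one = a) /\
  (forall a, mul (inv a) a = one /\ mul a (inv a) = one).

Fixpoint gpow (g : G) (n : nat) : G :=
  match n with O => one | S n' => mul g (gpow g n') end.

Definition infinite_order (g : G) : Prop :=
  forall n : nat, (0 < n)%N -> gpow g n <> one.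

Definition is_subgroup (H : set G) : Prop :=
  H one /\ (forall a b, H a -> H b -> H (mul a b)) /\ (forall a, H a -> H (inv a)).

Context (X : topologicalType) (act : G -> X -> X).

Definition is_continuous_action : Prop :=
  (forall x, act one x = x) /\
  (forall g h x, act (mul g h) x = act g (act h x)) /\
  (forall g, continuous (act g)).

Definition triple_space : set (X * X * X) :=
  [set t | t.1.1 <> t.1.2 /\ t.1.2 <> t.2 /\ t.2 <> t.1.1].

Definition act3 (g : G) (t : X * X * X) : X * X * X :=
  (act g t.1.1, act g t.1.2, act g t.2).

Definition convergence_action : Prop :=
  forall K : set (X * X * X), compact K -> K `<=` triple_space ->
    finite_set [set g | exists2 t, K t & K (act3 g t)].

Definition stab (p : X) : set G := [set g | act g p = p].

Definition loxodromic (g : G) : Prop :=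
  infinite_order g /\
  exists a b : X, a <> b /\ forall x, act g x = x <-> (x = a \/ x = b).

Definition parabolic_point (p : X) : Prop :=
  exists H : set G, [/\ is_subgroup H, infinite_set H, H `<=` stab p &
                        forall g, H g -> ~ loxodromic g].

Definition conical_point (x : X) : Prop :=
  exists (gs : nat -> G) (a b : X), a <> b /\
    (act (gs n) x @[n --> \oo] --> a) /\
    (forall y, y <> x -> act (gs n) y @[n --> \oo] --> b).

Definition bounded_parabolic (p : X) : Prop :=
  parabolic_point p /\
  exists C : set X, compact C /\ C `<=` [set x | x <> p] /\
    [set x | exists g c, [/\ stab p g, C c & x = act g c]] = [set x | x <> p].

(* G is hyperbolic relative to P_1..P_s in the sense of Bowditch, with
   Bowditch boundary X (geometrically finite convergence action),
   p_i orbit representatives of parabolic points, P_i = Stab(p_i). *)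
Definition bowditch_rel_hyp (s : nat) (P : 'I_s -> set G) (p : 'I_s -> X) : Prop :=
  is_group /\ is_continuous_action /\ hausdorff_space X /\ compact [set: X] /\
  ((exists x : X, True) /\ forall x : X, ~ open [set x]) /\
  convergence_action /\
  (forall x, conical_point x \/ bounded_parabolic x) /\
  (forall i, bounded_parabolic (p i) /\ P i = stab (p i)) /\
  (forall i j g, act g (p i) = p j -> i = j) /\
  (forall x, parabolic_point x -> exists i g, x = act g (p i)).

(* topology on T u dG, realized on the sum type (X*X*X) + X *)
Definition two_in (U : set X) (t : X * X * X) : Prop :=
  (U t.1.1 /\ U t.1.2) \/ (U t.1.2 /\ U t.2) \/ (U t.2 /\ U t.1.1).

Definition TX : set ((X * X * X) + X) :=
  fun z => match z with inl t => triple_space t | inr _ => True end.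

Definition open_T (O : set (X * X * X)) : Prop :=
  exists2 V : set (X * X * X), open V & O = V `&` triple_space.

Definition open_TX (O : set ((X * X * X) + X)) : Prop :=
  O `<=` TX /\ open_T [set t | O (inl t)] /\
  forall x, O (inr x) -> exists U : set X,
    [/\ open U, U x, (forall y, U y -> O (inr y)) &
        (forall t, triple_space t -> two_in U t -> O (inl t))].

Definition compact_TX (K : set ((X * X * X) + X)) : Prop :=
  K `<=` TX /\
  forall (I : Type) (F : I -> set ((X * X * X) + X)),
    (forall i, open_TX (F i)) -> (forall k, K k -> exists i, F i k) ->
    exists l : list I, forall k, K k -> exists i, List.In i l /\ F i k.

Definition actTX (g : G) (z : (X * X * X) + X) : (X * X * X) + X :=
  match z with inl t => inl (act3 g t) | inr x => inr (act g x) end.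

Definition cusp_nbhd (p0 : X) (B : set (X * X * X)) : Prop :=
  exists (K : set ((X * X * X) + X)) (C : set X),
    compact_TX K /\ compact C /\ C `<=` [set x | x <> p0] /\
    [/\ [set x | exists g c, [/\ stab p0 g, C c & x = act g c]] = [set x | x <> p0],
        (exists O, [/\ open_TX O, (forall c, C c -> O (inr c)) & O `<=` K]) &
        B = [set t | triple_space t /\
                     ~ exists g k, [/\ stab p0 g, K k & inl t = actTX g k]]].

Definition translate (g : G) (B : set (X * X * X)) : set (X * X * X) :=
  [set t | exists2 t', B t' & t = act3 g t'].

Definition thick_part (s : nat) (B : 'I_s -> set (X * X * X)) : set (X * X * X) :=
  [set t | triple_space t /\ forall i g, ~ translate g (B i) t].

(* the image of S in the quotient G\T (quotient topology) is compact:
   open sets of G\T correspond to G-invariant open subsets of T *)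
Definition compact_mod_G (S : set (X * X * X)) : Prop :=
  forall (I : Type) (F : I -> set (X * X * X)),
    (forall i, open_T (F i) /\ forall g t, F i t -> F i (act3 g t)) ->
    (forall t, S t -> exists i, F i t) ->
    exists l : list I, forall t, S t -> exists i, List.In i l /\ F i t.

End RelHyp.

(* Main.v *)
Require Import Defs.
From HB Require Import structures.
From mathcomp Require Import all_boot all_order all_algebra.
From mathcomp Require Import all_classical all_reals all_analysis.
Local Open Scope classical_set_scope.

Lemma cont3 (X : topologicalType) (a b : X) (f : X -> X) :
  continuous f -> continuous (fun w => (a, b, f w)).
Proof.
move=> fc w.
have h1 : (fun _ : X => (a, b)) x @[x --> w] --> (a, b) by apply: cvg_cst.
exact: (cvg_pair h1 (fc w)).
Qed.

Set Implicit Arguments.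
Section Aux.
Context (G : Type) (mul : G -> G -> G) (one : G) (inv : G -> G)
  (X : topologicalType) (act : G -> X -> X).
Hypothesis (grp : is_group mul one inv) (actc : is_continuous_action mul one act).

Lemma actK g x : act (inv g) (act g x) = x.
Proof.
case: grp => _ [_ hi]; case: actc => a1 [aM _].
by rewrite -aM (hi g).1 a1.
Qed.

Lemma actKV g x : act g (act (inv g) x) = x.
Proof.
case: grp => _ [_ hi]; case: actc => a1 [aM _].
by rewrite -aM (hi g).2 a1.
Qed.

Lemma act_inj g x y : act g x = act g y -> x = y.
Proof. by move=> e; rewrite -(actK g x) e actK. Qed.

Lemma act_cont g : continuous (act g).
Proof. by case: actc => _ [_]. Qed.

Lemma transl_iff g (B : set (X * X * X)) t :
  translate act g B t <-> B (act3 act (inv g) t).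
Proof.
split.
  by case=> t' Bt' ->; case: t' Bt' => [[x y] z] /=; rewrite /act3 /= !actK.
move=> Bt; exists (act3 act (inv g) t) => //.
by case: t Bt => [[x y] z] /= _; rewrite /act3 /= !actKV.
Qed.

Lemma triple_act g t : triple_space t -> triple_space (act3 act g t).
Proof.
case: t => [[x y] z] [/= h1 [h2 h3]]; split => /=; last split => /=;
  by move/act_inj.
Qed.

Lemma stab_mul p a b : stab act p a -> stab act p b -> stab act p (mul a b).
Proof. by case: actc => _ [aM _]; rewrite /stab /= aM => ha hb; rewrite hb ha. Qed.

Lemma stab_inv p a : stab act p a -> stab act p (inv a).
Proof. by rewrite /stab /= => e; rewrite -{1}e actK. Qed.

Lemma actTX_mul a b k : actTX act (mul a b) k = actTX act a (actTX act b k).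
Proof.
case: actc => _ [aM _].
by case: k => [[[x y] z]|x] /=; rewrite /act3 /= ?aM.
Qed.


Lemma gA a b c : mul a (mul b c) = mul (mul a b) c.
Proof. by case: grp. Qed.
Lemma g1l a : mul one a = a. Proof. by case: grp => _ [h _]; case: (h a). Qed.
Lemma g1r a : mul a one = a. Proof. by case: grp => _ [h _]; case: (h a). Qed.
Lemma gVl a : mul (inv a) a = one. Proof. by case: grp => _ [_ h]; case: (h a). Qed.
Lemma gVr a : mul a (inv a) = one. Proof. by case: grp => _ [_ h]; case: (h a). Qed.
Lemma gc1 x g : mul (mul x g) (inv g) = x. Proof. by rewrite -gA gVr g1r. Qed.
Lemma gc2 x g : mul (mul x (inv g)) g = x. Proof. by rewrite -gA gVl g1r. Qed.
Lemma ginv_uniq x y : mul x y = one -> y = inv x.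
Proof. by move=> e; rewrite -(g1l y) -(gVl x) -gA e g1r. Qed.

Definition cj g k := mul (mul (inv g) k) g.

Lemma cj_mul g a b : cj g (mul a b) = mul (cj g a) (cj g b).
Proof. by rewrite /cj !gA gc1. Qed.

Lemma cj_one g : cj g one = one.
Proof. by rewrite /cj g1r gVl. Qed.

Lemma cj_inv g a : cj g (inv a) = inv (cj g a).
Proof. by apply: ginv_uniq; rewrite -cj_mul gVr cj_one. Qed.

Lemma cj_pow g k n : gpow mul one (cj g k) n = cj g (gpow mul one k n).
Proof.
elim: n => [|n IH] /=; first by rewrite cj_one.
by rewrite IH -cj_mul.
Qed.

Lemma cj_inj g a b : cj g a = cj g b -> a = b.
Proof.
move=> e; have : mul g (mul (cj g a) (inv g)) = mul g (mul (cj g b) (inv g)) by rewrite e.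
by rewrite /cj !gA !gc1 !gVr !g1l.
Qed.

Lemma cjK g h : cj g (mul (mul g h) (inv g)) = h.
Proof. by rewrite /cj !gA gVl g1l gc2. Qed.

Lemma act_cj g k x : act (cj g k) x = act (inv g) (act k (act g x)).
Proof. by case: actc => _ [aM _]; rewrite /cj !aM. Qed.

Lemma lox_cj g k : loxodromic mul one act k -> loxodromic mul one act (cj g k).
Proof.
case=> io [a [b [ab fx]]]; split.
  move=> n n0; rewrite cj_pow => e; apply: (io n n0).
  by apply: (@cj_inj g); rewrite e cj_one.
exists (act (inv g) a), (act (inv g) b); split.
  by move/act_inj.
move=> x; rewrite act_cj; split.
  move=> e; have e2 : act k (act g x) = act g x.
    by rewrite -{2}e actKV.
  by case: ((fx _).1 e2) => [ea|eb]; [left|right]; rewrite -?ea -?eb actK.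
move=> h; have : act k (act g x) = act g x.
  by apply/fx; case: h => ->; [left|right]; rewrite actKV.
by move=> ->; rewrite actK.
Qed.

Lemma parabolic_act g p : parabolic_point mul one inv act p ->
  parabolic_point mul one inv act (act g p).
Proof.
case=> H [[H1 [HM HV]] Hinf Hst Hlox].
exists [set k | H (cj g k)]; split.
- split; first by rewrite /= cj_one.
  split; first by move=> a b /= ha hb; rewrite cj_mul; exact: HM.
  by move=> a /= ha; rewrite cj_inv; exact: HV.
- move=> fin; apply: Hinf.
  apply: (sub_finite_set _ (finite_image (fun k => cj g k) fin)).
  move=> h hH; exists (mul (mul g h) (inv g)) => /=; by rewrite cjK.
- move=> k /= /Hst; rewrite /stab /= act_cj => e.
  by rewrite -{2}e actKV.
- by move=> k /= hk /(lox_cj g); apply: Hlox.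
Qed.

Lemma cusp_sep p0 B0 : cusp_nbhd act p0 B0 -> forall y, y <> p0 ->
  exists U', [/\ open U', U' y & forall t, B0 t -> ~ two_in U' t].
Proof.
case=> K [C [cK [cC [Csub [Ecov EO EB]]]]] y yp.
have : [set x | exists g c, [/\ stab act p0 g, C c & x = act g c]] y by rewrite Ecov.
case=> h [c [hs Cc ey]].
case: EO => O0 [oO Oc OK].
case: oO => [_ [_ Oloc]].
case: (Oloc c (Oc c Cc)) => U [oU Uc _ Otr].
exists ((act (inv h)) @^-1` U); split.
- by apply: open_comp => // x _; exact: act_cont.
- by rewrite /= ey actK.
move=> t; rewrite EB => -[tt nex] two; apply: nex.
exists h, (inl (act3 act (inv h) t)); split => //.
  apply: OK; apply: Otr; first exact: triple_act.
  by case: t {tt} two => [[x1 x2] x3]; rewrite /two_in /=.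
by case: t {tt two} => [[x1 x2] x3]; rewrite /= /act3 /= !actKV.
Qed.

Lemma cusp_inv p0 B0 k t : cusp_nbhd act p0 B0 -> stab act p0 k -> B0 t ->
  B0 (act3 act k t).
Proof.
case=> K [C [cK [cC [Csub [Ecov EO EB]]]]] hk.
case: EO => O0 [oO Oc OK].
rewrite EB => -[tt nex]; split; first exact: triple_act.
case=> g0 [k0 [hg0 Kk0 e]]; apply: nex.
exists (mul (inv k) g0), k0; split => //; first by apply: stab_mul => //; exact: stab_inv.
rewrite actTX_mul -e /= /act3 /= !actK.
by case: t {tt e}=> [[]].
Qed.

End Aux.
Unset Implicit Arguments.

Theorem lemma6p6 (G : Type) (mul : G -> G -> G) (one : G) (inv : G -> G)
  (X : topologicalType) (act : G -> X -> X)
  (s : nat) (P : 'I_s -> set G) (p : 'I_s -> X)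
  (hyp : bowditch_rel_hyp mul one inv act P p)
  (B : 'I_s -> set (X * X * X))
  (hBopen : forall i, open_T (B i))
  (hBcusp : forall i, cusp_nbhd act (p i) (B i))
  (hdisj : forall i j g h,
     (exists t, translate act g (B i) t /\ translate act h (B j) t) ->
     i = j /\ P i (mul (inv g) h))
  (hthick : compact_mod_G act (thick_part act B))
  (u v : X) (huv : u <> v)
  (hu : ~ parabolic_point mul one inv act u)
  (hv : ~ parabolic_point mul one inv act v)
  (hcomp : connected_component [set: X] u v) :
  exists w : X, thick_part act B (u, v, w).
Proof.
case: (hyp) => grp [actc [haus [_ [_ [_ [_ [hp _]]]]]]].
have cl1 : forall x : X, closed [set x].
  by move=> x; apply: accessible_closed_set1; apply: hausdorff_accessible.
apply: contrapT => nw.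
have nw' : forall w, triple_space (u, v, w) ->
    exists i g, translate act g (B i) (u, v, w).
  move=> w tw; apply: contrapT => nq; apply: nw; exists w; split => // i g tr.
  by apply: nq; exists i, g.
case: hcomp => Y [Yu _ Yc] Yv.
have [[w0 [Yw0 [w0u w0v]]]|no3] := pselect (exists w, Y w /\ w <> u /\ w <> v);
  last first.
  have e : [set u] = Y; last first.
    by apply: huv; have : [set u] v by rewrite e.
  apply: Yc.
  - by exists u.
  - exists (~` [set v]); first exact: closed_openC.
    apply/seteqP; split => x /=.
      by move=> ->; split => // e; apply: huv.
    case=> Yx xv; apply: contrapT => xu; apply: no3; exists x; split => //.
  - exists [set u]; first exact: cl1.
    by apply/seteqP; split => x /=; [move=> ->|case].
have [i [g tr0]] : exists i g, translate act g (B i) (u, v, w0).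
  by apply: nw'; split => //=; split => // e; apply: w0v.
have Wopen : forall g i, open [set w | translate act g (B i) (u, v, w)].
  move=> g' i'; case: (hBopen i') => V oV EBV.
  rewrite (_ : [set w | translate act g' (B i') (u, v, w)] =
     (fun w => (act (inv g') u, act (inv g') v, act (inv g') w)) @^-1` V `&`
     (act (inv g')) @^-1` (~` [set act (inv g') u] `&` ~` [set act (inv g') v])).
    apply: openI.
      apply: open_comp => // x _; apply: cont3; exact: (act_cont actc).
    apply: open_comp; first by move=> x _; exact: (act_cont actc).
    by apply: openI; apply: closed_openC.
  apply/seteqP; split => x /=; rewrite (transl_iff grp actc) EBV /act3 /=.
    by case=> Vx [_ [h2 h3]]; split => //; split; [exact: h3 | by move=> e; apply: h2].
  case=> Vx [h3 h2]; split => //; split; last by split; [by move=> e; apply: h2 | exact: h3].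
  by move/(act_inj grp actc).
set W := [set w | translate act g (B i) (u, v, w)].
have hpi := (hp i).1.1.
have gu : act (inv g) u <> p i.
  by move=> e; apply: hu; rewrite -(actKV grp actc g u) e; exact: parabolic_act.
have gv : act (inv g) v <> p i.
  by move=> e; apply: hv; rewrite -(actKV grp actc g v) e; exact: parabolic_act.
have [Uu [oUu Uuu sepu]] := cusp_sep grp actc (hBcusp i) gu.
have [Uv [oUv Uvv sepv]] := cusp_sep grp actc (hBcusp i) gv.
set Nu := (act (inv g)) @^-1` Uu.
set Nv := (act (inv g)) @^-1` Uv.
have oNu : open Nu by apply: open_comp => // x _; exact: (act_cont actc).
have oNv : open Nv by apply: open_comp => // x _; exact: (act_cont actc).
have dNu : forall w, Nu w -> ~ W w.
  move=> w Nw; rewrite /W /= (transl_iff grp actc) => Bw; apply: (sepu _ Bw).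
  by rewrite /two_in /act3 /=; right; right.
have dNv : forall w, Nv w -> ~ W w.
  move=> w Nw; rewrite /W /= (transl_iff grp actc) => Bw; apply: (sepv _ Bw).
  by rewrite /two_in /act3 /=; right; left.
set D := \bigcup_(q in [set q : G * 'I_s | forall w,
           ~ (translate act q.1 (B q.2) (u, v, w) /\ W w)])
         [set w | translate act q.1 (B q.2) (u, v, w)].
have oD : open D by apply: bigcup_open => q _; exact: Wopen.
have e : Y `&` W = Y; last first.
  have : (Y `&` W) u by rewrite e.
  case=> _; rewrite /W /= (transl_iff grp actc) => Bu.
  have := (hBcusp i); case=> K [C [_ [_ [_ [_ _ EB]]]]].
  by move: Bu; rewrite EB /triple_space /act3 /= => -[[_ [_ ]]].
apply: Yc.
- by exists w0.
- by exists W => //; exact: Wopen.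
- exists (~` (Nu `|` Nv `|` D)).
    by apply: open_closedC; apply: openU => //; apply: openU.
  apply/seteqP; split => x /=.
    case=> Yx Wx; split => //.
    case; first case.
    + by move=> /dNu; apply.
    + by move=> /dNv; apply.
    + by case=> q /= qd qx; apply: (qd x).
  case=> Yx nC; split => //.
  have xu : x <> u by move=> e; apply: nC; left; left; rewrite /Nu /= e.
  have xv : x <> v by move=> e; apply: nC; left; right; rewrite /Nv /= e.
  have [j [h trx]] : exists j h, translate act h (B j) (u, v, x).
    by apply: nw'; split => //=; split => // e; apply: xv.
  have [[w [a b]]|nex] :=
    pselect (exists w, translate act h (B j) (u, v, w) /\ W w); last first.
    exfalso; apply: nC; right; exists (h, j) => //= w [a b]; apply: nex.
    by exists w.
  have [ej Pj] := hdisj j i h g (ex_intro _ (u, v, w) (conj a b)).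
  subst j; rewrite /W /= (transl_iff grp actc).
  move: trx; rewrite (transl_iff grp actc) => Bt.
  have sk : stab act (p i) (inv (mul (inv h) g)).
    by apply: (stab_inv grp actc); rewrite -(hp i).2.
  have := cusp_inv grp actc _ (hBcusp i) sk Bt.
  have ek : forall y, act (inv (mul (inv h) g)) (act (inv h) y) = act (inv g) y.
    move=> y; apply: (act_inj grp actc (mul (inv h) g)).
    rewrite (actKV grp actc); case: (actc) => _ [aM _].
    by rewrite aM (actKV grp actc).
  by rewrite /act3 /= !ek.
Qed.
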